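(* Let $(b,c)$ be a weighted graph over $V$ and $m$ a measure on $V$. The following are equivalent: (i) for every $\alpha>0$ there is a nontrivial, nonnegative, bounded function $l$ on $V$ with $(\widetilde L+\alpha)l\le0$; (ii) for some $\alpha>0$ there is a nontrivial, nonnegative, bounded function $l$ on $V$ with $(\widetilde L+\alpha)l\le0$.
   Context: Let $V$ be a countably infinite set. A weighted graph over $V$ is a pair $(b,c)$ of maps $b:V\times V\to[0,\infty)$ and $c:V\to[0,\infty)$ with $b(x,x)=0$, $b(x,y)=b(y,x)$ and $\sum_{y\in V}b(x,y)<\infty$ for all $x,y\in V$. A measure on $V$ is a map $m:V\to(0,\infty)$. For $u$ with $\sum_y b(x,y)|u(y)|<\infty$ for all $x$ (in particular bounded $u$), $\widetilde Lu(x)=\frac1{m(x)}\sum_y b(x,y)(u(x)-u(y))+\frac{c(x)}{m(x)}u(x)$. *)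

(* Defs.v *)
From Stdlib Require Import Reals Classical ClassicalEpsilon.
Open Scope R_scope.

Definition enumeration {V : Type} (e : nat -> V) : Prop :=
  (forall n k, e n = e k -> n = k) /\ (forall v, exists n, e n = v).

(* Value of a convergent real series (0 if it does not converge). *)
Definition series_sum (a : nat -> R) : R :=
  match excluded_middle_informative (exists l, infinite_sum a l) with
  | left H => proj1_sig (constructive_indefinite_description _ H)
  | right _ => 0
  end.

(* Sum over V, computed along the enumeration e (for absolutely summable
   families, as used below, the value does not depend on e). *)
Definition vsum {V : Type} (e : nat -> V) (f : V -> R) : R :=
  series_sum (fun n => f (e n)).

Definition weighted_graph {V : Type} (e : nat -> V) (b : V -> V -> R) (c : V -> R) : Prop :=
  (forall x y, 0 <= b x y) /\ (forall x, 0 <= c x) /\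
  (forall x, b x x = 0) /\ (forall x y, b x y = b y x) /\
  (forall x, exists s, infinite_sum (fun n => b x (e n)) s).

Definition measure {V : Type} (m : V -> R) : Prop := forall x, 0 < m x.

Definition Ltilde {V : Type} (e : nat -> V) (b : V -> V -> R) (c m : V -> R)
  (u : V -> R) (x : V) : R :=
  / m x * vsum e (fun y => b x y * (u x - u y)) + c x / m x * u x.

Definition bounded_fun {V : Type} (u : V -> R) : Prop := exists M, forall x, Rabs (u x) <= M.
Definition nonneg_fun {V : Type} (u : V -> R) : Prop := forall x, 0 <= u x.
Definition nontrivial {V : Type} (u : V -> R) : Prop := exists x, u x <> 0.

Definition subsolution {V : Type} (e : nat -> V) (b : V -> V -> R) (c m : V -> R)
  (alpha : R) (l : V -> R) : Prop :=
  forall x, Ltilde e b c m l x + alpha * l x <= 0.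

(* Main.v *)
Require Import Defs.
From Stdlib Require Import Reals Lra Classical ClassicalEpsilon.
Open Scope R_scope.

Lemma sum_lin (f g : nat -> R) (K : R) n :
  sum_f_R0 (fun k => f k + K * g k) n = sum_f_R0 f n + K * sum_f_R0 g n.
Proof. induction n; simpl; [ring| rewrite IHn; ring]. Qed.

Lemma conv_dom (a f : nat -> R) (K : R) :
  (forall n, 0 <= a n) -> (exists s, infinite_sum a s) ->
  (forall n, Rabs (f n) <= K * a n) -> exists s, infinite_sum f s.
Proof.
  intros Ha [s Hs] Hf.
  assert (HK : forall n, 0 <= f n + K * a n <= 2 * (K * a n)).
  { intro n; specialize (Hf n); revert Hf; unfold Rabs; destruct (Rcase_abs (f n)); intros; lra. }
  assert (Hc : Un_cv (fun N => sum_f_R0 (fun n => 2 * (K * a n)) N) (0 + (2*K) * s)).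
  { eapply Un_cv_ext.
    - intro N. rewrite <- (sum_lin (fun _ => 0) a (2*K)). apply sum_eq. intros; ring.
    - apply CV_plus. intros eps He. exists 0%nat. intros. unfold Rdist.
      replace (sum_f_R0 (fun _ : nat => 0) n - 0) with 0.
      rewrite Rabs_R0; lra. induction n; simpl; [ring|]. 
      replace (sum_f_R0 (fun _ : nat => 0) n) with 0. ring. destruct n; [simpl; ring|].
      symmetry. assert (forall k, sum_f_R0 (fun _ : nat => 0) k = 0).
      { induction k; simpl; [ring| rewrite IHk; ring]. } apply H0.
      apply CV_mult. intros eps He. exists 0%nat. intros; unfold Rdist.
      replace (2*K - 2*K) with 0 by ring. rewrite Rabs_R0; lra. exact Hs. }
  destruct (Rseries_CV_comp _ _ HK (exist _ _ Hc)) as [l Hl].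
  exists (l - K * s).
  change (Un_cv (sum_f_R0 f) (l - K * s)).
  apply (Un_cv_ext (fun N => sum_f_R0 (fun n => f n + K * a n) N - K * sum_f_R0 a N)).
  - intro N. rewrite sum_lin. ring.
  - apply CV_minus. exact Hl. apply CV_mult.
    intros eps He. exists 0%nat. intros; unfold Rdist.
    replace (K - K) with 0 by ring. rewrite Rabs_R0; lra. exact Hs.
Qed.

Lemma series_sum_eq f s : infinite_sum f s -> series_sum f = s.
Proof.
  intro H. unfold series_sum.
  destruct (excluded_middle_informative _) as [H'|H'].
  - destruct (constructive_indefinite_description _ H') as [l Hl]. simpl.
    exact (UL_sequence _ _ _ Hl H).
  - exfalso; apply H'; eauto.
Qed.

Lemma series_le f g : (exists s, infinite_sum f s) -> (exists s, infinite_sum g s) ->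
  (forall n, f n <= g n) -> series_sum f <= series_sum g.
Proof.
  intros [s Hs] [t Ht] H. rewrite (series_sum_eq _ _ Hs), (series_sum_eq _ _ Ht).
  apply (@Rle_cv_lim (sum_f_R0 f) (sum_f_R0 g)); auto.
  intro n; apply sum_Rle; auto.
Qed.

Lemma summ_b {V : Type} (e : nat -> V) (b : V -> V -> R) (c : V -> R)
  (Hg : weighted_graph e b c) (u : V -> R) (K : R) (x : V) :
  (forall y, Rabs (u y) <= K) ->
  exists s, infinite_sum (fun n => b x (e n) * (u x - u (e n))) s.
Proof.
  intros Hu. destruct Hg as [Hb [_ [_ [_ Hs]]]].
  apply (conv_dom (fun n => b x (e n)) _ (2*K)); auto.
  intro n. rewrite Rabs_mult, (Rabs_right (b x (e n))) by (apply Rle_ge; auto).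
  rewrite Rmult_comm. apply Rmult_le_compat_r; auto.
  eapply Rle_trans; [apply Rabs_triang|]. rewrite Rabs_Ropp.
  pose proof (Hu x); pose proof (Hu (e n)); lra.
Qed.

Lemma zero_sum : infinite_sum (fun _ => 0) 0.
Proof.
  intros eps He. exists 0%nat. intros. unfold Rdist.
  assert (forall k, sum_f_R0 (fun _ : nat => 0) k = 0).
  { induction k; simpl; [ring| rewrite IHk; ring]. }
  rewrite H0. replace (0-0) with 0 by ring. rewrite Rabs_R0; lra.
Qed.

Theorem mainTheorem17 (V : Type) (e : nat -> V) (b : V -> V -> R) (c m : V -> R)
  (He : enumeration e) (Hg : weighted_graph e b c) (Hm : measure m) :
  (forall alpha, 0 < alpha ->
     exists l : V -> R, nontrivial l /\ nonneg_fun l /\ bounded_fun l /\ subsolution e b c m alpha l)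
  <->
  (exists alpha, 0 < alpha /\
     exists l : V -> R, nontrivial l /\ nonneg_fun l /\ bounded_fun l /\ subsolution e b c m alpha l).
Proof.
  split.
  - intros H. exists 1; split; [lra| apply H; lra].
  - intros [al [Hal [l [[x0 Hx0] [Hnn [[M HM] Hsub]]]]]] be Hbe.
    destruct (Rle_dec be al) as [Hle|Hlt].
    + exists l; repeat split; auto. exists x0; auto. exists M; auto.
      intro x. specialize (Hsub x). specialize (Hnn x). nra.
    + pose (E := fun r => exists x, r = l x).
      destruct (completeness E) as [s [Hub Hleast]].
      { exists M. intros r [x ->]. specialize (HM x). revert HM; unfold Rabs;
        destruct (Rcase_abs (l x)); intros; lra. }
      { exists (l x0); exists x0; auto. }
      assert (Hls : forall x, l x <= s) by (intro x; apply Hub; exists x; auto).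
      assert (Hs0 : 0 < s). { specialize (Hls x0). specialize (Hnn x0). lra. }
      pose (t := s * (1 - al / be)).
      assert (Hbt : be * t = s * (be - al)) by (unfold t; field; lra).
      assert (Ht0 : 0 <= t). { unfold t. apply Rmult_le_pos; [lra|].
        assert (al / be < 1). { apply (Rmult_lt_reg_r be); [lra|]. field_simplify; lra. }
        lra. }
      assert (Hts : t < s). { unfold t. assert (0 < al / be) by (apply Rdiv_lt_0_compat; lra). nra. }
      assert (Hx1 : exists x1, t < l x1).
      { apply NNPP; intro Hn. assert (s <= t). { apply Hleast. intros r [x ->].
          apply Rnot_lt_le. intro; apply Hn; eauto. } lra. }
      destruct Hx1 as [x1 Hx1].
      pose (l' := fun x => Rmax (l x - t) 0).
      assert (Hl'0 : forall x, 0 <= l' x) by (intro; apply Rmax_r).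
      assert (Hl'1 : forall x, l x - t <= l' x) by (intro; apply Rmax_l).
      assert (Hl'M : forall x, l' x <= M).
      { intro x. unfold l'. apply Rmax_lub. specialize (HM x); specialize (Hnn x).
        revert HM; unfold Rabs; destruct (Rcase_abs (l x)); intros; lra.
        specialize (HM x). pose proof (Rabs_pos (l x)). lra. }
      assert (HM' : forall y, Rabs (l' y) <= M).
      { intro y. rewrite Rabs_right. auto. apply Rle_ge; auto. }
      exists l'. split; [|split; [|split]].
      * exists x1. unfold l'. rewrite Rmax_left; lra.
      * exact Hl'0.
      * exists M; auto.
      * intro x. unfold subsolution, Ltilde, vsum in *. specialize (Hsub x).
        assert (Hmx : 0 < / m x) by (apply Rinv_0_lt_compat; apply Hm).
        assert (Hcm : 0 <= c x / m x).
        { destruct Hg as [_ [Hc _]]. unfold Rdiv. apply Rmult_le_pos; auto; lra. }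
        assert (Hbx : forall y, 0 <= b x y) by (intro; apply Hg).
        destruct (Rle_dec (l x) t) as [Hxt|Hxt].
        -- assert (Hl'x : l' x = 0) by (unfold l'; apply Rmax_right; lra).
           assert (HS : series_sum (fun n => b x (e n) * (l' x - l' (e n))) <= 0).
           { rewrite <- (series_sum_eq _ _ zero_sum). apply series_le.
             eapply summ_b; eauto. exists 0; apply zero_sum.
             intro n. rewrite Hl'x. specialize (Hbx (e n)). specialize (Hl'0 (e n)). nra. }
           rewrite Hl'x in *. nra.
        -- assert (Hl'x : l' x = l x - t) by (unfold l'; apply Rmax_left; lra).
           assert (HS : series_sum (fun n => b x (e n) * (l' x - l' (e n))) <=
                        series_sum (fun n => b x (e n) * (l x - l (e n)))).
           { apply series_le. eapply summ_b; eauto. eapply summ_b; eauto.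
             intro n. apply Rmult_le_compat_l; auto. rewrite Hl'x.
             specialize (Hl'1 (e n)). lra. }
           assert (/ m x * series_sum (fun n => b x (e n) * (l' x - l' (e n))) <=
                   / m x * series_sum (fun n => b x (e n) * (l x - l (e n))))
             by (apply Rmult_le_compat_l; lra).
           assert (c x / m x * (l x - t) <= c x / m x * l x) by nra.
           assert ((be - al) * l x <= (be - al) * s) by (apply Rmult_le_compat_l; [lra| auto]).
           rewrite Hl'x in *. nra.
Qed.
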